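(* For $r\ge2$ and $n\ge1$, the base-$r$ $n$-simplex has local $h^\ast$-polynomial \[ \ell^\ast(\mathcal{B}_{(r,n)};z)=z\sum_{i=0}^{r-2}f^{\langle r-1,i\rangle}_{(r,n-1)}+z\sum_{\ell=1}^{r-2}\left(\sum_{i=0}^{\ell-1}f^{\langle r-1,i\rangle}_{(r,n-1)}+z\sum_{i=\ell}^{r-2}f^{\langle r-1,i\rangle}_{(r,n-1)}\right). \]
   Context: For $r\ge2$, $n\ge1$, $\mathcal{B}_{(r,n)}:=\operatorname{conv}\bigl(e^{(1)},\ldots,e^{(n)},-\sum_{i=1}^n(r-1)r^{i-1}e^{(i)}\bigr)\subset\mathbb{R}^n$. For $m\ge0$ let $f_{(r,m)}(z):=(1+z+\cdots+z^{r-1})^m$ (so $f_{(r,0)}=1$). Every polynomial $f(z)\in\mathbb{R}[z]$ can be written uniquely as $f(z)=\sum_{\ell=0}^{r-2}z^\ell f^{(\ell)}(z^{r-1})$ with $f^{(\ell)}\in\mathbb{R}[z]$; set $f^{\langle r-1,\ell\rangle}:=f^{(\ell)}$ for $0\le\ell\le r-2$. For a lattice simplex $\Delta=\operatorname{conv}(v^{(0)},\ldots,v^{(d)})\subset\mathbb{R}^n$, $\ell^\ast(\Delta;z):=\sum_{x\in\Pi^\circ_\Delta\cap\mathbb{Z}^{n+1}}z^{x_{n+1}}$, where $\Pi^\circ_\Delta:=\{\sum_{i=0}^d\lambda_i(v^{(i)},1):0<\lambda_i<1\}$. *)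

(* Defs.v *)
From HB Require Import structures.
From mathcomp Require Import all_boot all_order all_algebra.
Set Implicit Arguments. Unset Strict Implicit. Unset Printing Implicit Defensive.
Import Order.TTheory GRing.Theory Num.Theory.
Local Open Scope ring_scope.

Definition lift_vert (n d : nat) (V : 'I_d.+1 -> 'I_n -> int)
  (i : 'I_d.+1) (j : 'I_n.+1) : int :=
  match unlift ord_max j with Some j' => V i j' | None => 1 end.

Definition in_open_par (R : realFieldType) (n d : nat)
  (V : 'I_d.+1 -> 'I_n -> int) (x : 'rV[int]_(n.+1)) : Prop :=
  exists lam : 'I_d.+1 -> R,
    (forall i, 0 < lam i < 1) /\
    forall j : 'I_n.+1,
      ((x ord0 j)%:~R : R) = \sum_(i < d.+1) lam i * (lift_vert V i j)%:~R.

(* p is the local h^*-polynomial l^*(conv(v^(0..d)); z):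
   the set of lattice points of the open parallelepiped is finite
   (enumerated without repetition by s) and p = sum_{x in it} z^{x_{n+1}}.
   (x_{n+1} = sum lam_i > 0 for such points, so absz is harmless.) *)
Definition is_lstar (R : realFieldType) (n d : nat)
  (V : 'I_d.+1 -> 'I_n -> int) (p : {poly int}) : Prop :=
  exists s : seq 'rV[int]_(n.+1),
    [/\ uniq s,
        (forall x, x \in s <-> in_open_par R V x) &
        p = \sum_(x <- s) 'X^(absz (x ord0 ord_max))].

(* Vertices of B_(r,n): v^(i) = e^(i+1) for i < n, and
   v^(n) = - sum_{j} (r-1) r^j e^(j+1)  (0-based j). *)
Definition Bvert (r n : nat) (i : 'I_n.+1) (j : 'I_n) : int :=
  if (i < n)%N then ((i == j :> nat) : nat)%:Z
  else - ((r.-1 * r ^ j)%N)%:Z.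
Arguments Bvert r n i j : clear implicits.

Definition fpoly (r m : nat) : {poly int} := (\sum_(k < r) 'X^k) ^+ m.

(* f^<r-1,l>: the unique polynomial f^(l) with
   f(z) = sum_{l=0}^{r-2} z^l f^(l)(z^(r-1));
   its j-th coefficient is the (l + j(r-1))-th coefficient of f. *)
Definition fcomp (r l : nat) (f : {poly int}) : {poly int} :=
  \poly_(j < size f) f`_(l + j * r.-1).

(* Main.v *)
Require Import Defs.
From HB Require Import structures.
From mathcomp Require Import all_boot all_order all_algebra.
From mathcomp Require Import zify ring.
Import Order.TTheory GRing.Theory Num.Theory.
Set Implicit Arguments. Unset Strict Implicit. Unset Printing Implicit Defensive.
Local Open Scope ring_scope.

Section Poly.
Variable r : nat.
Hypothesis hr : (2 <= r)%N.

Lemma coef_fcomp i (f : {poly int}) j : (fcomp r i f)`_j = f`_(i + j * r.-1).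
Proof.
rewrite /fcomp coef_poly; case: ifP => // /negbT; rewrite -leqNgt => hj.
rewrite nth_default //; apply: (leq_trans hj).
have: (1 <= r.-1)%N by lia.
by move=> h; rewrite (leq_trans (leq_pmulr _ h)) ?leq_addl.
Qed.

Lemma fcompD i (f g : {poly int}) : fcomp r i (f + g) = fcomp r i f + fcomp r i g.
Proof. by apply/polyP => j; rewrite coefD !coef_fcomp coefD. Qed.

Lemma fcomp0 i : fcomp r i 0 = 0.
Proof. by apply/polyP => j; rewrite coef_fcomp !coef0. Qed.

Lemma fcomp_sum i (F : nat -> {poly int}) m n :
  fcomp r i (\sum_(m <= a < n) F a) = \sum_(m <= a < n) fcomp r i (F a).
Proof. exact: (big_morph _ (fcompD i) (fcomp0 i)). Qed.

Lemma fcompMXn i a (F : {poly int}) : (i < r.-1)%N -> (a < r)%N ->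
  fcomp r i (F * 'X^a) =
    if (a <= i)%N then fcomp r (i - a) F else 'X * fcomp r (i + r.-1 - a) F.
Proof.
move=> hi ha; apply/polyP => j; rewrite coef_fcomp coefMXn.
case: (leqP a i) => hai.
  rewrite coef_fcomp ifF; last by apply/negbTE; rewrite -leqNgt (leq_trans hai) ?leq_addr.
  by rewrite addnBAC.
rewrite coefXM; case: j => [|j] /=.
  by rewrite mul0n addn0 ifT //; lia.
rewrite coef_fcomp ifF; last by apply/negbTE; rewrite -leqNgt mulSn; move: (j * _)%N => t; lia.
congr (_`_ _); rewrite mulSn; move: (j * _)%N => t; lia.
Qed.

Definition Aop (phi : nat -> {poly int}) (i : nat) : {poly int} :=
  \sum_(0 <= a < r) 'X^(i < a) * phi ((r.-1 * a + i) %/ r)%N.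

Definition Eop (phi : nat -> {poly int}) (i : nat) : {poly int} :=
  \sum_(0 <= a < i.+1) phi a + \sum_(i.+1 <= a < r) 'X * phi a.-1.

Lemma divE x y d : (y < d)%N -> ((x * d + y) %/ d = x)%N.
Proof. move=> h; rewrite divnMDl ?divn_small ?addn0 //; lia. Qed.

Lemma div_case_aux q a i : (a < q.+1)%N -> (i < q)%N ->
  ((q.+1.-1 * a + i) %/ q.+1)%N = if (a <= i)%N then a else a.-1.
Proof.
move=> ha hi /=; case: (leqP a i) => hai.
  have -> : (q * a + i = a * q.+1 + (i - a))%N by rewrite mulnS mulnC; lia.
  by apply: divE; lia.
case: a ha hai => [|a] // ha hai /=.
have -> : (q * a.+1 + i = a * q.+1 + (q.+1 + i - a.+1))%N.
  by rewrite !mulnS mulnC; lia.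
by apply: divE; lia.
Qed.

Lemma div_case a i : (a < r)%N -> (i < r.-1)%N ->
  ((r.-1 * a + i) %/ r)%N = if (a <= i)%N then a else a.-1.
Proof. by case: r hr => [|q] // _; apply: div_case_aux. Qed.

Lemma Aop_E phi i : (i < r.-1)%N -> Aop phi i = Eop phi i.
Proof.
move=> hi; rewrite /Aop /Eop (big_cat_nat _ (n := i.+1)) //=; last by lia.
congr (_ + _); apply: eq_big_nat => a /andP [h1 h2].
  rewrite div_case; [|lia|lia]; rewrite ifT; last lia.
  have -> : (i < a)%N = false by lia.
  by rewrite expr0 mul1r.
rewrite div_case; [|lia|lia]; rewrite ifF; last lia.
have -> : (i < a)%N = true by lia.
by rewrite expr1.
Qed.

Definition gm m i := fcomp r i (fpoly r m).

Lemma gm_step m i : (i < r.-1)%N -> gm m.+1 i = Eop (gm m) i.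
Proof.
move=> hi; rewrite /gm /fpoly exprSr -/(fpoly r m) -(big_mkord xpredT (fun k => 'X^k)).
rewrite mulr_sumr fcomp_sum /Eop (big_cat_nat _ (n := i.+1)) //=; last by lia.
congr (_ + _).
  rewrite big_nat_rev /=; apply: eq_big_nat => a /andP [h1 h2].
  rewrite fcompMXn; try lia; rewrite ifT; last by lia.
  by congr fcomp; lia.
rewrite big_nat_rev /=; apply: eq_big_nat => a /andP [h1 h2].
rewrite fcompMXn; try lia; rewrite ifF; last by lia.
by congr (_ * fcomp _ _ _); lia.
Qed.

Lemma gm0 i : gm 0 i = if i == 0%N then 1 else 0.
Proof.
apply/polyP => j; rewrite /gm /fpoly expr0 coef_fcomp coef1.
case: (eqVneq i 0%N) => [->|hi].
  rewrite coef1 add0n muln_eq0.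
  have -> : (r.-1 == 0%N) = false by lia.
  by rewrite orbF.
rewrite coef0; have -> : (i + j * r.-1 == 0)%N = false by move: (j * _)%N => t; lia.
by [].
Qed.


Lemma div_lt a i : (a < r)%N -> (i < r.-1)%N -> ((r.-1 * a + i) %/ r < r.-1)%N.
Proof. by move=> ha hi; rewrite div_case //; case: ifP => h; lia. Qed.

Lemma Aop_ext phi psi i : (forall b, (b < r.-1)%N -> phi b = psi b) ->
  (i < r.-1)%N -> Aop phi i = Aop psi i.
Proof.
move=> h hi; apply: eq_big_nat => a /andP [_ ha].
by rewrite h // div_lt.
Qed.

Lemma Aop_lin phi psi i :
  Aop (fun b => phi b - 'X * psi b) i = Aop phi i - 'X * Aop psi i.
Proof.
rewrite /Aop mulr_sumr -sumrB; apply: eq_bigr => a _.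
by rewrite mulrBr mulrCA.
Qed.

Lemma big1_nat m n (F : nat -> {poly int}) :
  (forall a, (m <= a < n)%N -> F a = 0) -> \sum_(m <= a < n) F a = 0.
Proof. by move=> h; rewrite (eq_big_nat _ _ h) big1. Qed.

Lemma gm1 i : (i < r.-1)%N -> gm 1 i - 'X * gm 0 i = 1.
Proof.
move=> hi; rewrite gm_step // /Eop.
rewrite big_ltn // gm0 eqxx big1_nat; last first.
  by move=> a /andP [h _]; rewrite gm0 ifF //; lia.
rewrite addr0 gm0.
case: (eqVneq i 0%N) => [->|hi0].
  rewrite big_ltn; last lia.
  rewrite /= gm0 eqxx mulr1 big1_nat; last first.
    by move=> a /andP [h _]; rewrite gm0 ifF ?mulr0 //; lia.
  by rewrite addr0 addrK.
rewrite big1_nat; last first.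
  by move=> a /andP [h _]; rewrite gm0 ifF ?mulr0 //; lia.
by rewrite ?(negbTE hi0) mulr0 addr0 ?subr0.
Qed.

Lemma iterA m i : (i < r.-1)%N ->
  iter m Aop (fun _ => 1) i = gm m.+1 i - 'X * gm m i.
Proof.
elim: m i => [|m IH] i hi; first by rewrite gm1.
rewrite iterS (Aop_ext (psi := fun b => gm m.+1 b - 'X * gm m b)) //.
by rewrite Aop_lin !Aop_E // -!gm_step.
Qed.

Lemma final_alg (g : nat -> {poly int}) :
  'X * \sum_(0 <= b < r.-1) (Eop g b - 'X * g b) =
  'X * (\sum_(0 <= i < r.-1) g i)
  + 'X * (\sum_(1 <= l < r.-1)
           ((\sum_(0 <= i < l) g i) + 'X * (\sum_(l <= i < r.-1) g i))).
Proof.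
set F := fun l => (\sum_(0 <= i < l) g i) + 'X * (\sum_(l <= i < r.-1) g i).
have -> : \sum_(0 <= b < r.-1) (Eop g b - 'X * g b) = \sum_(1 <= l < (r.-1).+1) F l.
  rewrite big_add1 /=; apply: eq_big_nat => b /andP [_ hb]; rewrite /Eop /F.
  rewrite (big_add1 _ _ b) /= big_ltn; last lia.
  rewrite -addrA; congr (_ + _); rewrite big_ltn // mulr_sumr addrAC subrr add0r //.
rewrite big_nat_recr /=; last lia.
rewrite /F (@big_geq _ _ _ r.-1 r.-1) // mulr0 addr0 mulrDr addrC.
by [].
Qed.

End Poly.
Definition Tsum (r M k : nat) : nat := (\sum_(j < M) ((k * (r.-1 * r ^ j)) %/ r ^ M))%N.
Definition Hh (r M k : nat) : nat := (k - Tsum r M k)%N.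
Definition st (r M k : nat) : nat := ((r.-1 * k) %/ r ^ M)%N.

Section Nat.
Variable r : nat.
Hypothesis hr : (2 <= r)%N.

Lemma rpos : (0 < r)%N. Proof. lia. Qed.
Lemma rMpos M : (0 < r ^ M)%N. Proof. by rewrite expn_gt0 rpos. Qed.

Lemma geom M : (1 + \sum_(j < M) r.-1 * r ^ j)%N = (r ^ M)%N.
Proof.
elim: M => [|M IH]; first by rewrite big_ord0.
rewrite big_ord_recr /= addnA IH expnS.
have -> : r = (r.-1).+1 by lia.
by rewrite /= mulSn addnC.
Qed.

Lemma Tsum_le M k : (Tsum r M k <= k)%N.
Proof.
rewrite -(leq_pmul2r (rMpos M)) /Tsum big_distrl /=.
apply: (@leq_trans (\sum_(j < M) k * (r.-1 * r ^ j))%N).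
  by apply: leq_sum => j _; apply: leq_divM.
rewrite -big_distrr /= leq_mul2l -(geom M) leq_addl orbT //.
Qed.

Lemma st_step M a k : st r M.+1 (a * r ^ M + k) = ((r.-1 * a + st r M k) %/ r)%N.
Proof.
rewrite /st expnSr divnMA; congr (_ %/ _)%N.
by rewrite mulnDr mulnA divnMDl ?rMpos.
Qed.

Lemma Tsum_step M a k : Tsum r M.+1 (a * r ^ M + k) =
  (st r M.+1 (a * r ^ M + k) + a * (r ^ M - 1) + Tsum r M k)%N.
Proof.
rewrite /Tsum big_ord_recl /= expn0 muln1 mulnC -/(st r M.+1 _) -addnA; congr (_ + _)%N.
rewrite (eq_bigr (fun j : 'I_M => a * (r.-1 * r ^ j) + (k * (r.-1 * r ^ j)) %/ r ^ M)%N).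
  by rewrite big_split /= -big_distrr /= -{2}(geom M) addKn.
move=> j _; rewrite /bump /= add1n expnS expnSr (mulnC r (r ^ j)%N) !mulnA divnMr ?rpos //.
have -> : ((a * r ^ M + k) * r.-1 * r ^ j = (a * r.-1 * r ^ j) * r ^ M + k * r.-1 * r ^ j)%N by ring.
by rewrite divnMDl ?rMpos.
Qed.

Lemma st_lt M k : (k < r ^ M)%N -> (st r M k < r.-1)%N.
Proof.
move=> hk; rewrite /st ltn_divLR ?rMpos // ltn_pmul2l //; lia.
Qed.

Lemma H_step M a k : (a < r)%N -> (k < r ^ M)%N ->
  Hh r M.+1 (a * r ^ M + k) = (Hh r M k + (st r M k < a))%N.
Proof.
move=> ha hk; rewrite /Hh Tsum_step st_step div_case //; last exact: st_lt.
have hT := Tsum_le M k; have hP : (a <= a * r ^ M)%N := leq_pmulr a (rMpos M).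
rewrite mulnBr muln1.
move: (Tsum r M k) (st r M k) (a * r ^ M)%N hT hP => T b P hT hP.
case: (leqP a b) => h /=.
  lia.
lia.
Qed.

End Nat.

Definition Lsum (r M : nat) (phi : nat -> {poly int}) : {poly int} :=
  \sum_(0 <= k < r ^ M) (if (r %| k)%N then 0 else 'X^(Hh r M k) * phi (st r M k)).

Lemma sum_split a P (G : nat -> {poly int}) :
  \sum_(0 <= k < a * P) G k = \sum_(0 <= i < a) \sum_(0 <= k < P) G (i * P + k)%N.
Proof.
elim: a => [|a IH]; first by rewrite mul0n !big_geq.
rewrite big_nat_recr //= mulSnr (big_cat_nat _ (n := (a * P)%N)) //= ?leq_addr // IH.
congr (_ + _); rewrite -{1}(add0n (a * P)%N) big_addn addKn.
by apply: eq_big_nat => k _; rewrite addnC.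
Qed.

Section LS.
Variable r : nat.
Hypothesis hr : (2 <= r)%N.

Lemma Lsum_step M phi : (0 < M)%N -> Lsum r M.+1 phi = Lsum r M (Aop r phi).
Proof.
move=> hM; rewrite /Lsum expnS sum_split exchange_big_nat /=.
apply: eq_big_nat => k /andP [_ hk].
have hd i : (r %| i * r ^ M + k)%N = (r %| k)%N.
  by rewrite dvdn_addr // dvdn_mull // dvdn_exp.
case: ifP => hdk.
  by apply: big1_nat => i _; rewrite hd hdk.
rewrite /Aop mulr_sumr; apply: eq_big_nat => i /andP [_ hi].
rewrite hd hdk (H_step hr) // st_step; last done.
rewrite [X in X * _ = _]GRing.exprD. by rewrite mulrA.
Qed.

Lemma Lsum_iter m phi : Lsum r m.+1 phi = Lsum r 1 (iter m (Aop r) phi).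
Proof.
elim: m phi => [|m IH] phi //.
by rewrite Lsum_step // IH iterSr.
Qed.

Lemma Lsum1 psi : Lsum r 1 psi = 'X * \sum_(0 <= b < r.-1) psi b.
Proof.
rewrite /Lsum expn1 big_ltn ?rpos // dvdn0 add0r.
rewrite -{1}(prednK (rpos hr)) big_add1 /= mulr_sumr.
apply: eq_big_nat => b /andP [_ hb].
have hst : st r 1 b.+1 = b.
  by rewrite /st expn1 -[(r.-1 * b.+1)%N]addn0 div_case //; lia.
have -> : (r %| b.+1)%N = false.
  by apply/negbTE/negP => /(dvdn_leq (ltn0Sn b)); lia.
rewrite /Hh /Tsum big_ord1 expn0 muln1 mulnC -/(st r 1 b.+1) hst.
by rewrite subSn // subnn expr1.
Qed.

End LS.

Section Lat.
Variables (R : realFieldType) (r n : nat).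
Hypothesis hr : (2 <= r)%N.

Definition Kof (x : 'rV[int]_(n.+1)) : int :=
  x 0 ord_max - \sum_(j < n) x 0 (lift ord_max j).

Lemma widen_lift (j : 'I_n) : widen_ord (leqnSn n) j = lift ord_max j.
Proof. by apply: val_inj; rewrite /= /bump leqNgt ltn_ord. Qed.

Lemma lv_max i : lift_vert (Bvert r n) i ord_max = 1.
Proof. by rewrite /lift_vert unlift_none. Qed.

Lemma lv_lift i j : lift_vert (Bvert r n) i (lift ord_max j) = Bvert r n i j.
Proof. by rewrite /lift_vert liftK. Qed.

Lemma intr_sum m (F : 'I_m -> int) : ((\sum_(j < m) F j)%:~R : R) = \sum_(j < m) (F j)%:~R.
Proof. exact: (big_morph _ (intrD _) (mulr0z 1)). Qed.

Lemma S2 (lam : 'I_n.+1 -> R) j :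
  \sum_(i < n.+1) lam i * (lift_vert (Bvert r n) i (lift ord_max j))%:~R
  = lam (lift ord_max j) - lam ord_max * (r.-1 * r ^ j)%N%:R.
Proof.
under eq_bigr => i _ do rewrite lv_lift.
rewrite big_ord_recr /= (bigD1 j) //= big1 => [|i hij].
  rewrite /Bvert /= ltn_ord ltnn eqxx addr0 mulr1 widen_lift intrN mulrN.
  by [].
rewrite /Bvert /= ltn_ord (_ : (i == j :> nat) = false) ?mulr0 //.
exact: negbTE.
Qed.

Lemma S1 (lam : 'I_n.+1 -> R) :
  \sum_(i < n.+1) lam i * (lift_vert (Bvert r n) i ord_max)%:~R = \sum_(i < n.+1) lam i.
Proof. by apply: eq_bigr => i _; rewrite lv_max mulr1. Qed.

Lemma geomR : ((r ^ n)%N%:R : R) = 1 + \sum_(j < n) (r.-1 * r ^ j)%N%:R.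
Proof. by rewrite -(geom hr n) natrD natr_sum. Qed.

Lemma Npos : (0 < r ^ n)%N. Proof. by rewrite expn_gt0; lia. Qed.
Lemma NR0 : ((r ^ n)%N%:R : R) != 0.
Proof. by rewrite pnatr_eq0 -lt0n Npos. Qed.
Lemma NRgt0 : 0 < ((r ^ n)%N%:R : R).
Proof. by rewrite ltr0n Npos. Qed.

Lemma par_fwd x : in_open_par R (Bvert r n) x ->
  (0 < Kof x < (r ^ n)%N%:Z) /\ (forall j : 'I_n,
     0 < (r ^ n)%N%:Z * x 0 (lift ord_max j) + Kof x * (r.-1 * r ^ j)%N%:Z < (r ^ n)%N%:Z).
Proof.
move=> [lam [hb heq]].
have hl j : ((x 0 (lift ord_max j))%:~R : R) =
    lam (lift ord_max j) - lam ord_max * (r.-1 * r ^ j)%N%:R by rewrite heq S2.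
have hm : ((x 0 ord_max)%:~R : R) = \sum_(i < n.+1) lam i by rewrite heq S1.
have hK : ((Kof x)%:~R : R) = lam ord_max * (r ^ n)%N%:R.
  rewrite /Kof intrD intrN intr_sum hm big_ord_recr /=.
  under eq_bigr => j _ do rewrite widen_lift.
  under [X in _ - X]eq_bigr => j _ do rewrite hl.
  by rewrite sumrB -mulr_sumr geomR; ring.
split.
  rewrite -!(ltr_int R) hK.
  have [h0 h1] := andP (hb ord_max).
  rewrite mulr_gt0 ?NRgt0 //= [X in _ < X]/intmul /= -[X in _ < X]mul1r.
  by rewrite ltr_pM2r ?NRgt0.
move=> j; rewrite -!(ltr_int R) intrD !intrM hK hl.
have [h0 h1] := andP (hb (lift ord_max j)).
have -> : ((r ^ n)%N%:Z%:~R : R) = (r ^ n)%N%:R by [].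
have -> : ((r.-1 * r ^ j)%N%:Z%:~R : R) = (r.-1 * r ^ j)%N%:R by [].
set N := ((r ^ n)%N%:R : R).
have -> : N * (lam (lift ord_max j) - lam ord_max * (r.-1 * r ^ j)%N%:R) +
   lam ord_max * N * (r.-1 * r ^ j)%N%:R = N * lam (lift ord_max j) by ring.
rewrite mulr_gt0 ?NRgt0 //= -[X in _ < X]mulr1.
by rewrite ltr_pM2l ?NRgt0.
Qed.

Lemma par_bwd x :
  (0 < Kof x < (r ^ n)%N%:Z) -> (forall j : 'I_n,
     0 < (r ^ n)%N%:Z * x 0 (lift ord_max j) + Kof x * (r.-1 * r ^ j)%N%:Z < (r ^ n)%N%:Z) ->
  in_open_par R (Bvert r n) x.
Proof.
move=> hK hj.
set N := ((r ^ n)%N%:R : R).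
pose lam (i : 'I_n.+1) : R := if unlift ord_max i is Some j then
   (((r ^ n)%N%:Z * x 0 (lift ord_max j) + Kof x * (r.-1 * r ^ j)%N%:Z)%:~R / N)
   else ((Kof x)%:~R / N).
have hN := NRgt0.
have bnd (z : int) : 0 < z < (r ^ n)%N%:Z -> 0 < (z%:~R : R) / N < 1.
  move=> /andP [h0 h1]; rewrite divr_gt0 ?ltr0z //= ltr_pdivrMr // mul1r.
  by rewrite -/N -[N]/(((r ^ n)%N%:Z)%:~R) ltr_int.
exists lam; split.
  move=> i; rewrite /lam; case: (unliftP ord_max i) => [j _|_].
    by apply: bnd.
  by apply: bnd.
move=> i; case: (unliftP ord_max i) => [j ->|->].
  rewrite S2 /lam liftK unlift_none intrD !intrM.
  have -> : ((r ^ n)%N%:Z%:~R : R) = N by [].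
  have -> : ((r.-1 * r ^ j)%N%:Z%:~R : R) = (r.-1 * r ^ j)%N%:R by [].
  by field; rewrite NR0.
rewrite S1 big_ord_recr /= /lam unlift_none.
under eq_bigr => j _ do rewrite widen_lift liftK intrD !intrM.
have -> : ((r ^ n)%N%:Z%:~R : R) = N by [].
rewrite /Kof intrD intrN intr_sum.
under [in RHS]eq_bigr => j _ do
  have -> : ((r.-1 * r ^ j)%N%:Z%:~R : R) = (r.-1 * r ^ j)%N%:R by [].
set S := \sum_(j < n) ((x 0 (lift ord_max j))%:~R : R).
set c := fun j : 'I_n => ((r.-1 * r ^ j)%N%:R : R).
rewrite -/S.
set K := ((x 0 ord_max)%:~R - S).
rewrite (eq_bigr (fun j => (x 0 (lift ord_max j))%:~R + K / N * c j)); last first.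
  by move=> j _; rewrite /c; field; rewrite NR0.
rewrite big_split /= -/S -mulr_sumr /K /N geomR.
have hC : 1 + \sum_(i < n) c i != 0 by rewrite /c -geomR NR0.
by field.
Qed.

End Lat.

Lemma int_zero (N a : int) : 0 < N -> - N < N * a < N -> a = 0.
Proof. move=> h /andP [h1 h2]. nia. Qed.

Lemma int_false (N x y : int) : 0 < N -> 0 < N * x + y * N < N -> False.
Proof.
move=> h /andP [h1 h2].
have e : x + y = 0 by apply: int_zero h _; rewrite mulrDr (mulrC N y); lia.
have : N * (x + y) = 0 by rewrite e mulr0.
rewrite mulrDr (mulrC N y); lia.
Qed.

Section Enum.
Variables (r n : nat).
Hypothesis hr : (2 <= r)%N.
Hypothesis hn : (1 <= n)%N.

Definition xk (k : nat) : 'rV[int]_(n.+1) :=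
  \row_(j < n.+1) (if unlift ord_max j is Some j' then
     - ((k * (r.-1 * r ^ j')) %/ r ^ n)%N%:Z else (Hh r n k)%:Z).

Lemma xk_max k : xk k 0 ord_max = (Hh r n k)%:Z.
Proof. by rewrite mxE unlift_none. Qed.

Lemma xk_lift k j : xk k 0 (lift ord_max j) = - ((k * (r.-1 * r ^ j)) %/ r ^ n)%N%:Z.
Proof. by rewrite mxE liftK. Qed.

Lemma Kof_xk k : Kof (xk k) = k%:Z.
Proof.
rewrite /Kof xk_max.
under eq_bigr => j _ do rewrite xk_lift.
rewrite sumrN opprK -(big_morph _ PoszD (erefl 0%:Z)) -/(Tsum r n k) -PoszD /Hh subnK //.
exact: Tsum_le.
Qed.

Lemma not_dvd k (j : 'I_n) : ~~ (r %| k)%N -> ~~ (r ^ n %| k * (r.-1 * r ^ j))%N.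
Proof.
move=> hk; apply/negP => hd; move/negP: hk; apply.
have hjn : (j < n)%N := ltn_ord j.
have e : (r ^ n = r * r ^ (n - j.+1) * r ^ j)%N.
  by rewrite -expnS -expnD; congr (_ ^ _)%N; lia.
move: hd; rewrite e mulnA dvdn_pmul2r ?expn_gt0 ?rpos // => hd.
have : (r %| k * r.-1)%N by apply: dvdn_trans hd; apply: dvdn_mulr.
have -> : r = (r.-1).+1 by lia.
by rewrite Gauss_dvdl ?coprimeSn.
Qed.

Lemma xk_cond k : (0 < k < r ^ n)%N -> ~~ (r %| k)%N ->
  (0 < Kof (xk k) < (r ^ n)%N%:Z) /\ (forall j : 'I_n,
     0 < (r ^ n)%N%:Z * xk k 0 (lift ord_max j) + Kof (xk k) * (r.-1 * r ^ j)%N%:Z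
       < (r ^ n)%N%:Z).
Proof.
move=> /andP [k0 kN] hk; rewrite Kof_xk; split; first by rewrite !ltz_nat k0 kN.
move=> j; rewrite xk_lift.
set m := (k * (r.-1 * r ^ j))%N.
have e : (r ^ n)%N%:Z * - (m %/ r ^ n)%N%:Z + k%:Z * (r.-1 * r ^ j)%N%:Z = (m %% r ^ n)%N%:Z.
  rewrite -PoszM mulrN (mulrC _ (Posz _)) -PoszM {2}/m.
  have := divn_eq m (r ^ n); rewrite -/m => {2}->.
  by rewrite PoszD addrA addNr add0r.
rewrite e; apply/andP; split; last by rewrite ltz_nat ltn_pmod ?expn_gt0 ?rpos.
rewrite -[0]/(Posz 0) ltz_nat lt0n.
exact: not_dvd.
Qed.

Lemma in_s_cond x : (0 < Kof x < (r ^ n)%N%:Z) -> (forall j : 'I_n,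
     0 < (r ^ n)%N%:Z * x 0 (lift ord_max j) + Kof x * (r.-1 * r ^ j)%N%:Z < (r ^ n)%N%:Z) ->
  exists2 k, (0 < k < r ^ n)%N && ~~ (r %| k)%N & x = xk k.
Proof.
move=> hK hj.
have [k ek] : exists k : nat, Kof x = k%:Z.
  by exists `|Kof x|%N; rewrite gez0_abs //; case/andP: hK => h _; apply: ltW.
have hk : (0 < k < r ^ n)%N by move: hK; rewrite ek -[0]/(Posz 0) !ltz_nat.
have hNz : 0 < (r ^ n)%N%:Z by rewrite -[0]/(Posz 0) ltz_nat expn_gt0 rpos.
have nd : ~~ (r %| k)%N.
  apply/negP => /dvdnP [t et].
  have j0 : (n.-1 < n)%N by lia.
  have := hj (Ordinal j0); rewrite ek /= et.
  rewrite -PoszM.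
  have -> : ((t * r) * (r.-1 * r ^ n.-1))%N = (t * r.-1 * r ^ n)%N.
    rewrite -{2}(prednK hn) expnS; ring.
  rewrite PoszM.
  exact: int_false.
exists k; first by rewrite hk.
have hxj j : x 0 (lift ord_max j) = xk k 0 (lift ord_max j).
  have [_ h2] := xk_cond hk nd.
  have h1 := hj j; have := h2 j; rewrite Kof_xk -ek.
  move: h1; set a := x 0 _; set b := xk k 0 _; set t := (_ * _)%R => h1 h2'.
  have : a - b = 0.
    apply: (int_zero hNz); rewrite mulrBr.
    lia.
  by move/eqP; rewrite subr_eq0 => /eqP.
apply/rowP => j.
case: (unliftP ord_max j) => [j' ->|->]; first exact: hxj.
have := Kof_xk k; rewrite /Kof.
under eq_bigr => i _ do rewrite -hxj.
move=> e2; move: ek; rewrite /Kof => ek.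
apply: (addIr (- \sum_(j0 < n) x 0 (lift ord_max j0))).
by rewrite ek; apply/esym; exact: e2.
Qed.

End Enum.

Unset Implicit Arguments.

Theorem theorem4p2 (R : realFieldType) (r n : nat) (hr : (2 <= r)%N) (hn : (1 <= n)%N) :
  is_lstar R (Bvert r n)
    ('X * (\sum_(0 <= i < r.-1) fcomp r i (fpoly r n.-1))
     + 'X * (\sum_(1 <= l < r.-1)
               ((\sum_(0 <= i < l) fcomp r i (fpoly r n.-1))
                + 'X * (\sum_(l <= i < r.-1) fcomp r i (fpoly r n.-1))))).
Proof.
set ks := [seq k <- index_iota 0 (r ^ n) | ~~ (r %| k)%N].
exists (map (xk r n) ks); split.
- rewrite map_inj_in_uniq ?filter_uniq ?iota_uniq //.
  move=> a b _ _ e; have := Kof_xk n hr a; rewrite e Kof_xk //.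
  by move=> [].
- move=> x; split.
    move=> /mapP [k]; rewrite mem_filter mem_index_iota => /andP [nd hk] ->.
    have hk' : (0 < k < r ^ n)%N.
      rewrite (andP hk).2 andbT lt0n; apply/negP => /eqP k0.
      by move: nd; rewrite k0 dvdn0.
    have [h1 h2] := xk_cond hr hn hk' nd.
    exact: par_bwd.
  move=> /(par_fwd hr) [h1 h2].
  have [k /andP [hk nd] ->] := in_s_cond hr hn h1 h2.
  apply/mapP; exists k => //.
  by rewrite mem_filter mem_index_iota nd /= (andP hk).2.
apply/esym; rewrite big_map big_filter big_mkcond /=.
have -> : \sum_(i <- index_iota 0 (r ^ n))
    (if ~~ (r %| i)%N then 'X^(absz (xk r n i 0 ord_max)) else 0)
    = Lsum r n (fun=> 1).
  apply: eq_bigr => k _; rewrite xk_max /=.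
  by case: (r %| k)%N; rewrite /= ?mulr1.
clear ks; case: n hn => [|m] // _.
rewrite Lsum_iter // Lsum1 //=.
rewrite (eq_big_nat _ _ (F2 := fun b => Eop r (gm r m) b - 'X * gm r m b)); last first.
  by move=> b /andP [_ hb]; rewrite iterA // gm_step.
by rewrite final_alg.
Qed.
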